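(* For all $a,b\in[0,j_{3/2,1}]$, $$|b\sin a-a\sin b|\ge|a-b|\sqrt{(a\cos a-\sin a)(b\cos b-\sin b)},$$ where $j_{3/2,1}=4.4934\ldots$ is the first positive root of $\sin x=x\cos x$. *)

(* Defs.v *)
From Stdlib Require Import Reals.
Open Scope R_scope.

Definition first_pos_root_sin_xcos (j : R) : Prop :=
  0 < j /\ sin j = j * cos j /\
  (forall x, 0 < x < j -> sin x <> x * cos x).

(* Main.v *)
Require Import Defs.
From Coquelicot Require Import Coquelicot.
From Stdlib Require Import Reals Lra Psatz.
Open Scope R_scope.

Lemma incr (f df : R -> R) x y : x <= y ->
  (forall t, x <= t <= y -> is_derive f t (df t)) ->
  (forall t, x <= t <= y -> 0 <= df t) -> f x <= f y.
Proof.
  intros Hxy Hd Hp.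
  destruct (MVT_gen f x y df) as [c [Hc E]].
  - intros t Ht. apply Hd. rewrite Rmin_left, Rmax_right in Ht by lra. lra.
  - intros t Ht. rewrite Rmin_left, Rmax_right in Ht by lra.
    apply continuity_pt_filterlim. apply (ex_derive_continuous f t).
    eexists. apply Hd; lra.
  - rewrite Rmin_left, Rmax_right in Hc by lra.
    assert (0 <= df c) by (apply Hp; lra).
    assert (0 <= df c * (y - x)) by (apply Rmult_le_pos; lra). lra.
Qed.


Ltac mono f df y Hy :=
  let H := fresh in
  assert (H : f 0 <= f y);
  [ apply (incr f df 0 y Hy); [intros; auto_derive; auto; field | intros ]
  | simpl in H; rewrite ?sin_0, ?cos_0 in H ].

Lemma tay1 y : 0 <= y -> sin y <= y.
Proof.
  intro Hy. mono (fun y => y - sin y) (fun y => 1 - cos y) y Hy.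
  2: lra. pose proof (COS_bound t); lra.
Qed.
Lemma tay2 y : 0 <= y -> 1 - y^2/2 <= cos y.
Proof.
  intro Hy. mono (fun y => cos y - 1 + y^2/2) (fun y => y - sin y) y Hy.
  2: lra. pose proof (tay1 t); lra.
Qed.
Lemma tay3 y : 0 <= y -> y - y^3/6 <= sin y.
Proof.
  intro Hy. mono (fun y => sin y - y + y^3/6) (fun y => cos y - 1 + y^2/2) y Hy.
  2: lra. pose proof (tay2 t); lra.
Qed.
Lemma tay4 y : 0 <= y -> cos y <= 1 - y^2/2 + y^4/24.
Proof.
  intro Hy. mono (fun y => 1 - y^2/2 + y^4/24 - cos y) (fun y => sin y - y + y^3/6) y Hy.
  2: lra. pose proof (tay3 t); lra.
Qed.
Lemma tay5 y : 0 <= y -> sin y <= y - y^3/6 + y^5/120.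
Proof.
  intro Hy. mono (fun y => y - y^3/6 + y^5/120 - sin y) (fun y => 1 - y^2/2 + y^4/24 - cos y) y Hy.
  2: lra. pose proof (tay4 t); lra.
Qed.
Lemma tay6 y : 0 <= y -> 1 - y^2/2 + y^4/24 - y^6/720 <= cos y.
Proof.
  intro Hy. mono (fun y => cos y - (1 - y^2/2 + y^4/24 - y^6/720)) (fun y => y - y^3/6 + y^5/120 - sin y) y Hy.
  2: lra. pose proof (tay5 t); lra.
Qed.
Lemma tay7 y : 0 <= y -> y - y^3/6 + y^5/120 - y^7/5040 <= sin y.
Proof.
  intro Hy. mono (fun y => sin y - (y - y^3/6 + y^5/120 - y^7/5040)) (fun y => cos y - (1 - y^2/2 + y^4/24 - y^6/720)) y Hy.
  2: lra. pose proof (tay6 t); lra.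
Qed.
Open Scope R_scope.

Definition Nf t := 3*t^2*(sin t)^2 + 2*t^2*(cos t)^2 + 4*t*sin t*cos t - 6*(sin t)^2.

Lemma Npos t : 0 <= t -> 0 <= Nf t.
Proof.
  intro Ht. unfold Nf.
  pose proof (sin2_cos2 t) as E. unfold Rsqr in E.
  destruct (Rle_or_lt 8 (3*t^2)) as [Hb|Hb].
  - assert (Hid : 3*t^2*(sin t)^2 + 2*t^2*(cos t)^2 + 4*t*sin t*cos t - 6*(sin t)^2
       = 2*(t*cos t + sin t)^2 + (3*t^2-8)*(sin t)^2) by ring.
    rewrite Hid. assert (0 <= (3*t^2-8)*(sin t)^2) by (apply Rmult_le_pos; [lra| apply pow2_ge_0]). pose proof (pow2_ge_0 (t*cos t+sin t)); lra.
  - set (y := 2*t).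
    assert (Hy : 0 <= y) by (unfold y; lra).
    assert (HC := tay6 y Hy). assert (HS := tay7 y Hy).
    assert (EC : cos y = 1 - 2 * sin t * sin t) by (unfold y; apply cos_2a_sin).
    assert (ES : sin y = 2 * sin t * cos t) by (unfold y; apply sin_2a).
    assert (Hid : 3*t^2*(sin t)^2 + 2*t^2*(cos t)^2 + 4*t*sin t*cos t - 6*(sin t)^2
       = 5*y^2/8 - 3 + cos y * (3 - y^2/8) + y * sin y).
    { rewrite EC, ES. unfold y. nra. }
    rewrite Hid.
    assert (Hy2 : y^2 <= 32/3) by (unfold y; nra).
    assert (H1 : (1 - y^2/2 + y^4/24 - y^6/720) * (3 - y^2/8) <= cos y * (3 - y^2/8))
      by (apply Rmult_le_compat_r; nra).
    assert (H2 : y * (y - y^3/6 + y^5/120 - y^7/5040) <= y * sin y)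
      by (apply Rmult_le_compat_l; lra).
    assert (HP : 0 <= y^4 * (1/48 - y^2/960 - y^4/40320)).
    { apply Rmult_le_pos. nra. nra. }
    nra.
Qed.
Open Scope R_scope.

Definition g t := sin t - t * cos t.
Definition w t := t / sqrt (g t).
Definition W1 t := (g t - t^2 * sin t / 2) / (g t * sqrt (g t)).
Definition W2 t := t * Nf t / (4 * (g t)^2 * sqrt (g t)).

Lemma dw t : 0 < g t -> is_derive w t (W1 t).
Proof.
  intro Hg. unfold w, W1, Nf. unfold g in *.
  auto_derive.
  - assert (sqrt (sin t - t*cos t) > 0) by (apply sqrt_lt_R0; lra).
    replace (sin t + - (t*cos t)) with (sin t - t*cos t) by ring. repeat split; lra.
  - replace (sin t + - (t*cos t)) with (sin t - t*cos t) by ring.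
    assert (Hr : sqrt (sin t - t*cos t) > 0) by (apply sqrt_lt_R0; lra).
    assert (Hrr := sqrt_sqrt (sin t - t*cos t) ltac:(lra)).
    set (r := sqrt (sin t - t*cos t)) in *. clearbody r.
    replace (sin t) with (r*r + t*cos t) by lra. field. lra.
Qed.
Lemma dW1 t : 0 < g t -> is_derive W1 t (W2 t).
Proof.
  intro Hg. unfold W1, W2, Nf. unfold g in *.
  auto_derive.
  - assert (sqrt (sin t - t*cos t) > 0) by (apply sqrt_lt_R0; lra).
    replace (sin t + - (t*cos t)) with (sin t - t*cos t) by ring. repeat split; try nra.
  - replace (sin t + - (t*cos t)) with (sin t - t*cos t) by ring.
    assert (Hr : sqrt (sin t - t*cos t) > 0) by (apply sqrt_lt_R0; lra).
    assert (Hrr := sqrt_sqrt (sin t - t*cos t) ltac:(lra)).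
    set (r := sqrt (sin t - t*cos t)) in *. clearbody r.
    replace (sin t) with (r*r + t*cos t) by lra. field. lra.
Qed.

Lemma dcomb f df c d k x : is_derive f x df ->
  is_derive (fun y => c + (y - k)*d - f y) x (d - df).
Proof.
  intro H. apply (is_derive_minus (fun y => c + (y-k)*d) f x d df); [auto_derive; auto; ring | exact H].
Qed.

Definition Hf a t := sin a / a - sin t / t - (t - a) / (w a * w t).

Lemma dH a t : 0 < a -> 0 < t -> 0 < g a -> 0 < g t ->
  is_derive (Hf a) t ((w a - w t + (t - a) * W1 t) / (w a * (w t)^2)).
Proof.
  intros Ha Ht Hga Hgt. unfold Hf, w, W1. unfold g in *.
  assert (Hr : sqrt (sin t - t*cos t) > 0) by (apply sqrt_lt_R0; lra).
  assert (Hrr := sqrt_sqrt (sin t - t*cos t) ltac:(lra)).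
  assert (Hq : sqrt (sin a - a*cos a) > 0) by (apply sqrt_lt_R0; lra).
  assert (Hqq := sqrt_sqrt (sin a - a*cos a) ltac:(lra)).
  auto_derive.
  - replace (sin t + - (t*cos t)) with (sin t - t*cos t) by ring.
    repeat split; try apply Rgt_not_eq; try apply Rmult_gt_0_compat; try lra;
    apply Rdiv_lt_0_compat; lra.
  - replace (sin t + - (t*cos t)) with (sin t - t*cos t) by ring.
    set (r := sqrt (sin t - t*cos t)) in *. clearbody r.
    set (q := sqrt (sin a - a*cos a)) in *. clearbody q.
    replace (sin t) with (r*r + t*cos t) by lra. field. lra.
Qed.
Open Scope R_scope.

Lemma gpos0 t : 0 < t <= 2 -> 0 < g t.
Proof.
  intro Ht. unfold g.
  assert (H3 := tay3 t ltac:(lra)). assert (H4 := tay4 t ltac:(lra)).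
  assert (t * cos t <= t * (1 - t^2/2 + t^4/24)) by (apply Rmult_le_compat_l; lra).
  assert (0 < t^3 * (8 - t^2)) by (apply Rmult_lt_0_compat; [apply pow_lt; lra | nra]).
  assert (t^3 * (8 - t^2) = 8*t^3 - t^5) by ring.
  assert (t * (1 - t^2/2 + t^4/24) = t - t^3/2 + t^5/24) by field.
  lra.
Qed.

Lemma gcont : continuity g.
Proof.
  unfold g. apply continuity_minus; [apply continuity_sin|].
  apply continuity_mult; [apply derivable_continuous, derivable_id | apply continuity_cos].
Qed.

Lemma gpos j (hj : first_pos_root_sin_xcos j) t : 0 < t < j -> 0 < g t.
Proof.
  destruct hj as [hj0 [_ hj]]. intro Ht.
  destruct (Rlt_or_le 0 (g t)) as [H|H]; auto.
  destruct (Rle_or_lt t 2) as [H2|H2]. { apply gpos0; lra. }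
  assert (H1 := gpos0 1 ltac:(lra)).
  destruct (IVT_cor g 1 t gcont ltac:(lra)) as [z [Hz Ez]].
  { assert (0 <= g 1 * - g t) by (apply Rmult_le_pos; lra). lra. }
  exfalso. apply (hj z). lra. unfold g in Ez. lra.
Qed.

Lemma W1mono j (hj : first_pos_root_sin_xcos j) x y : 0 < x -> x <= y -> y < j -> W1 x <= W1 y.
Proof.
  intros Hx Hxy Hy. apply (incr W1 W2); auto.
  - intros t Ht. apply dW1. apply (gpos j hj); lra.
  - intros t Ht. assert (Hg := gpos j hj t ltac:(lra)). unfold W2.
    assert (Hs : sqrt (g t) > 0) by (apply sqrt_lt_R0; lra).
    apply Rdiv_le_0_compat.
    + apply Rmult_le_pos; [lra | apply Npos; lra].
    + apply Rmult_lt_0_compat; [|lra]. nra.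
Qed.

Lemma tangent j (hj : first_pos_root_sin_xcos j) a t : 0 < a -> a <= t -> t < j ->
  0 <= w a - w t + (t - a) * W1 t.
Proof.
  intros Ha Hat Ht.
  assert (H : (fun y => w t + (y - t) * W1 t - w y) a <= (fun y => w t + (y - t) * W1 t - w y) t).
  { apply (incr (fun y => w t + (y - t) * W1 t - w y) (fun y => W1 t - W1 y)); auto.
    - intros x Hx. apply dcomb, dw, (gpos j hj); lra.
    - intros x Hx. assert (W1 x <= W1 t) by (apply (W1mono j hj); lra). lra. }
  simpl in H. lra.
Qed.

Lemma wpos t : 0 < t -> 0 < g t -> 0 < w t.
Proof.
  intros. unfold w. apply Rdiv_lt_0_compat; auto. apply sqrt_lt_R0; auto.
Qed.

Lemma Hmono j (hj : first_pos_root_sin_xcos j) a b : 0 < a -> a <= b -> b < j -> 0 <= Hf a b.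
Proof.
  intros Ha Hab Hb.
  assert (Hga := gpos j hj a ltac:(lra)).
  assert (H0 : Hf a a = 0).
  { unfold Hf. replace (a - a) with 0 by ring. unfold Rdiv. ring. }
  rewrite <- H0. apply (incr (Hf a) (fun t => (w a - w t + (t - a) * W1 t) / (w a * (w t)^2))); auto.
  - intros t Ht. apply dH; try lra; apply (gpos j hj); lra.
  - intros t Ht. assert (Hgt := gpos j hj t ltac:(lra)).
    apply Rdiv_le_0_compat. apply (tangent j hj); lra.
    assert (0 < w a) by (apply wpos; auto). assert (0 < w t) by (apply wpos; lra). apply Rmult_lt_0_compat; [lra | apply pow_lt; lra].
Qed.

Lemma core j (hj : first_pos_root_sin_xcos j) a b : 0 < a -> a < b -> b < j ->
  (b - a) * sqrt (g a * g b) <= b * sin a - a * sin b.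
Proof.
  intros Ha Hab Hb.
  assert (H := Hmono j hj a b Ha ltac:(lra) Hb). unfold Hf, w in H.
  assert (Hga := gpos j hj a ltac:(lra)). assert (Hgb := gpos j hj b ltac:(lra)).
  rewrite sqrt_mult by lra.
  assert (Hra : sqrt (g a) > 0) by (apply sqrt_lt_R0; lra).
  assert (Hrb : sqrt (g b) > 0) by (apply sqrt_lt_R0; lra).
  set (ra := sqrt (g a)) in *. set (rb := sqrt (g b)) in *.
  set (X := b * sin a - a * sin b - (b - a) * (ra * rb)).
  assert (E : sin a / a - sin b / b - (b - a) / (a / ra * (b / rb)) = X / (a * b)).
  { unfold X. field. repeat split; lra. }
  rewrite E in H.
  assert (0 <= X / (a*b) * (a*b)) by (apply Rmult_le_pos; nra).
  replace (X / (a*b) * (a*b)) with X in H0 by (field; split; lra).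
  unfold X in H0. lra.
Qed.

Theorem mainTheorem9 (j : R) (hj : first_pos_root_sin_xcos j) (a b : R)
  (ha : 0 <= a <= j) (hb : 0 <= b <= j) :
  Rabs (b * sin a - a * sin b) >=
  Rabs (a - b) * sqrt ((a * cos a - sin a) * (b * cos b - sin b)).
Proof.
  assert (Hj := hj). destruct Hj as [Hj0 [Hjr _]].
  assert (EP : (a * cos a - sin a) * (b * cos b - sin b) = g a * g b) by (unfold g; ring).
  assert (Habs := Rabs_pos (b * sin a - a * sin b)).
  assert (Triv : (a * cos a - sin a) * (b * cos b - sin b) = 0 \/ a = b ->
    Rabs (b * sin a - a * sin b) >=
    Rabs (a - b) * sqrt ((a * cos a - sin a) * (b * cos b - sin b))).
  { intros [E|E].
    - rewrite E, sqrt_0. lra.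
    - subst. replace (b - b) with 0 by ring. rewrite Rabs_R0. lra. }
  destruct (Req_dec a 0) as [E|Ea].
  { apply Triv. left. subst. rewrite sin_0. ring. }
  destruct (Req_dec b 0) as [E|Eb].
  { apply Triv. left. subst. rewrite sin_0. ring. }
  destruct (Req_dec a j) as [E|Eaj].
  { apply Triv. left. subst. rewrite Hjr. ring. }
  destruct (Req_dec b j) as [E|Ebj].
  { apply Triv. left. subst. rewrite Hjr. ring. }
  rewrite EP.
  destruct (Rtotal_order a b) as [Hl|[He|Hg]].
  - assert (C := core j hj a b ltac:(lra) Hl ltac:(lra)).
    assert (0 <= sqrt (g a * g b)) by apply sqrt_pos.
    rewrite (Rabs_left1 (a - b)) by lra.
    assert (0 <= (b - a) * sqrt (g a * g b)) by (apply Rmult_le_pos; lra).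
    rewrite (Rabs_pos_eq (b * sin a - a * sin b)) by lra. lra.
  - subst. replace (b - b) with 0 by ring. rewrite Rabs_R0. lra.
  - assert (C := core j hj b a ltac:(lra) Hg ltac:(lra)).
    assert (0 <= sqrt (g b * g a)) by apply sqrt_pos.
    rewrite (Rabs_pos_eq (a - b)) by lra.
    assert (0 <= (a - b) * sqrt (g b * g a)) by (apply Rmult_le_pos; lra).
    rewrite (Rabs_left1 (b * sin a - a * sin b)) by lra. rewrite Rmult_comm with (r1 := g a). lra.
Qed.
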